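(* Let $d,H\in\mathbb{N}$, $d\geq2$, $0<s\leq\frac{1}{4}$, $N\geq(2\sqrt{d}/s)^3H^{\frac{1}{d-1}}$, let \[X_{1},X_{2},\ldots,X_{H}\subseteq \mathbb{R}^{d-1}\times [\tfrac{1}{2}+s,H+\tfrac{1}{2}-s]\] be pairwise disjoint, and suppose that $X:=\bigcup_{m=1}^{H}X_{m}$ is $s$-separated. Then there exists a $2^{8}N^{2}H^{2}$-bilipschitz mapping $\Psi\colon \mathbb{R}^{d}\to\mathbb{R}^{d}$ such that (i) $\Psi(x)=x$ for all $x\in\mathbb{R}^{d-1}\times(\mathbb{R}\setminus (\frac{1}{2},H+\frac{1}{2}))$; (ii) $\Psi(X_{m})\subseteq (\frac{1}{N}\mathbb{Z}^{d-1}\setminus \mathbb{Z}^{d-1})\times\{m\}$ for $m=1,2,\ldots,H$; (iii) $\|\pi(\Psi(x))-\pi(x)\|\leq s^{2}$ for all $x\in X$, where $\pi\colon\mathbb{R}^d\to\mathbb{R}^{d-1}$ is the projection onto the first $d-1$ coordinates.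
   Context: $\|\cdot\|$ is the Euclidean norm. A set is $s$-separated if distinct points are at Euclidean distance at least $s$. A mapping is $L$-bilipschitz if it is injective and both it and its inverse are $L$-Lipschitz. $N$ need not be an integer a priori; $\frac1N\mathbb{Z}^{d-1}=\{z/N: z\in\mathbb{Z}^{d-1}\}$. *)

(* Defs.v *)
From HB Require Import structures.
From mathcomp Require Import all_boot all_order all_algebra.
From mathcomp Require Import all_classical all_reals exp.
Set Implicit Arguments. Unset Strict Implicit. Unset Printing Implicit Defensive.
Import Order.TTheory GRing.Theory Num.Theory.
Local Open Scope ring_scope.
Local Open Scope classical_set_scope.

Section Defs.
Variable R : realType.

Definition enorm (n : nat) (v : 'rV[R]_n) : R := Num.sqrt (\sum_(i < n) v 0 i ^+ 2).

(* k-th coordinate (0-indexed) of x in R^d; 0 if k >= d *)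
Definition coord (d : nat) (x : 'rV[R]_d) (k : nat) : R :=
  match @insub nat (fun k => k < d)%N 'I_d k with Some i => x 0 i | None => 0 end.

Definition lastc (d : nat) (x : 'rV[R]_d) : R := coord x d.-1.

Definition projd (d : nat) (x : 'rV[R]_d) : 'rV[R]_(d.-1) :=
  \row_(i < d.-1) coord x i.

Definition separated (d : nat) (s : R) (X : set 'rV[R]_d) : Prop :=
  forall x y, X x -> X y -> x <> y -> s <= enorm (x - y).

Definition bilipschitz (d : nat) (L : R) (f : 'rV[R]_d -> 'rV[R]_d) : Prop :=
  injective f /\
  (forall x y, enorm (f x - f y) <= L * enorm (x - y)) /\
  (forall x y, enorm (x - y) <= L * enorm (f x - f y)).

Definition in_scaled_lattice (n : nat) (N : R) (v : 'rV[R]_n) : Prop :=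
  forall i, exists z : int, v 0 i = z%:~R / N.

Definition in_lattice (n : nat) (v : 'rV[R]_n) : Prop :=
  forall i, exists z : int, v 0 i = z%:~R.

End Defs.

(* Main.v *)
Require Import Defs.
From HB Require Import structures.
From mathcomp Require Import all_boot all_order all_algebra.
From mathcomp Require Import all_classical all_reals exp.
From mathcomp Require Import lra ring zify.
Set Implicit Arguments. Unset Strict Implicit. Unset Printing Implicit Defensive.
Import Order.TTheory GRing.Theory Num.Theory.
Local Open Scope ring_scope.
Local Open Scope classical_set_scope.


Section Enorm.
Variable R : realType.
Implicit Types (n : nat).

Definition ssq n (v : 'rV[R]_n) : R := \sum_(i < n) v 0 i ^+ 2.

Lemma ssq_ge0 n (v : 'rV[R]_n) : 0 <= ssq v.
Proof. by apply: sumr_ge0 => i _; rewrite sqr_ge0. Qed.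

Lemma enorm_ge0 n (v : 'rV[R]_n) : 0 <= enorm v.
Proof. exact: sqrtr_ge0. Qed.

Lemma enorm_sq n (v : 'rV[R]_n) : enorm v ^+ 2 = ssq v.
Proof. by rewrite /enorm sqr_sqrtr // ssq_ge0. Qed.

Lemma enorm_le n (v : 'rV[R]_n) c : 0 <= c -> ssq v <= c ^+ 2 -> enorm v <= c.
Proof.
move=> c0 h; rewrite /enorm -(ger0_norm c0) -sqrtr_sqr ler_sqrt //.
exact: sqr_ge0.
Qed.

Lemma enorm_ge n (v : 'rV[R]_n) c : c ^+ 2 <= ssq v -> c <= enorm v.
Proof.
move=> h; case: (leP c 0) => [c0|c0]; first exact: le_trans c0 (enorm_ge0 _).
rewrite /enorm -(ger0_norm (ltW c0)) -sqrtr_sqr ler_sqrt //.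
exact: ssq_ge0.
Qed.

Lemma coord_le_enorm n (v : 'rV[R]_n) i : `|v 0 i| <= enorm v.
Proof.
apply: enorm_ge; rewrite real_normK ?num_real //.
rewrite /ssq (bigD1 i) //= lerDl.
by apply: sumr_ge0 => j _; rewrite sqr_ge0.
Qed.

Lemma enormB n (u v : 'rV[R]_n) : enorm (u - v) = enorm (v - u).
Proof.
rewrite /enorm; congr Num.sqrt; apply: eq_bigr => i _.
by rewrite !mxE -sqrrN opprB.
Qed.

Lemma enormZ n a (v : 'rV[R]_n) : enorm (a *: v) = `|a| * enorm v.
Proof.
rewrite /enorm -sqrtr_sqr -sqrtrM ?sqr_ge0 //; congr Num.sqrt.
rewrite mulr_sumr; apply: eq_bigr => i _.
by rewrite !mxE exprMn.
Qed.

Lemma enorm0 n : enorm (0 : 'rV[R]_n) = 0.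
Proof.
rewrite /enorm big1 ?sqrtr0 // => i _; by rewrite mxE expr0n.
Qed.

Lemma enorm_eq0 n (v : 'rV[R]_n) : enorm v = 0 -> v = 0.
Proof.
move=> h; have: ssq v = 0 by rewrite -enorm_sq h expr0n.
move/eqP; rewrite /ssq psumr_eq0 => [|i _]; last exact: sqr_ge0.
move/allP=> H; apply/matrixP => i j; rewrite (ord1 i) mxE.
have := H j (mem_index_enum j); rewrite /= sqrf_eq0.
by move/eqP.
Qed.

Lemma lagrange n (u v : 'rV[R]_n) :
  2 * (ssq u * ssq v - (\sum_(i < n) u 0 i * v 0 i) ^+ 2) =
  \sum_(i < n) \sum_(j < n) (u 0 i * v 0 j - u 0 j * v 0 i) ^+ 2.
Proof.
have E : forall i j, (u 0 i * v 0 j - u 0 j * v 0 i) ^+ 2 =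
   u 0 i ^+ 2 * v 0 j ^+ 2 + u 0 j ^+ 2 * v 0 i ^+ 2
   - 2 * ((u 0 i * v 0 i) * (u 0 j * v 0 j)) by move=> i j; ring.
set Su := ssq u; set Sv := ssq v; set P := \sum_(i < n) u 0 i * v 0 i.
have Ei : forall i : 'I_n, \sum_(j < n) (u 0 i * v 0 j - u 0 j * v 0 i) ^+ 2 =
   u 0 i ^+ 2 * Sv + Su * v 0 i ^+ 2 - 2 * (u 0 i * v 0 i) * P.
  move=> i; rewrite /Sv /Su /P /ssq !mulr_sumr !mulr_suml -big_split -sumrB /=.
  apply: eq_bigr => j _; ring.
rewrite (eq_bigr _ (fun i _ => Ei i)) sumrB big_split /= -!mulr_suml -!mulr_sumr.
rewrite -/Su -/Sv -/P.
rewrite /Su /Sv /P /ssq. ring.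
Qed.

Lemma cauchy_schwarz n (u v : 'rV[R]_n) :
  \sum_(i < n) u 0 i * v 0 i <= enorm u * enorm v.
Proof.
set S := \sum_(i < n) _.
have h : S ^+ 2 <= (enorm u * enorm v) ^+ 2.
  rewrite exprMn !enorm_sq; have := lagrange u v.
  have : 0 <= \sum_(i < n) \sum_(j < n) (u 0 i * v 0 j - u 0 j * v 0 i) ^+ 2.
    by apply: sumr_ge0 => i _; apply: sumr_ge0 => j _; exact: sqr_ge0.
  rewrite -/S => H1 H2; rewrite -H2 in H1; nra.
have p : 0 <= enorm u * enorm v by rewrite mulr_ge0 ?enorm_ge0.
case: (leP S 0) => [S0|S0]; first exact: le_trans S0 p.
by rewrite -ler_sqr ?nnegrE // ltW.
Qed.

Lemma enormD n (u v : 'rV[R]_n) : enorm (u + v) <= enorm u + enorm v.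
Proof.
apply: enorm_le; first by rewrite addr_ge0 ?enorm_ge0.
have -> : ssq (u + v) = ssq u + 2 * \sum_(i < n) u 0 i * v 0 i + ssq v.
  rewrite /ssq mulr_sumr -!big_split /=; apply: eq_bigr => i _.
  rewrite !mxE; ring.
have := cauchy_schwarz u v; rewrite sqrrD -!enorm_sq; lra.
Qed.

Lemma enormDB n (x y z : 'rV[R]_n) : enorm (x - z) <= enorm (x - y) + enorm (y - z).
Proof. by have := enormD (x - y) (y - z); rewrite addrA subrK. Qed.

End Enorm.



Section Split.
Variable R : realType.
Variable n : nat.
Implicit Types (u v : 'rV[R]_n.+1) (y : 'rV[R]_n).

Lemma coordE m (x : 'rV[R]_m) i (h : (i < m)%N) : Defs.coord x i = x 0 (Ordinal h).
Proof. by rewrite /Defs.coord insubT. Qed.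

Lemma coord_ord m (x : 'rV[R]_m) (i : 'I_m) : Defs.coord x i = x 0 i.
Proof. by rewrite (coordE x (ltn_ord i)); congr (x 0 _); apply: val_inj. Qed.

Lemma coordB m (x y : 'rV[R]_m) i : Defs.coord (x - y) i = Defs.coord x i - Defs.coord y i.
Proof. by rewrite /Defs.coord; case: (insub i) => [a|]; rewrite ?mxE ?subr0. Qed.

Lemma coordD m (x y : 'rV[R]_m) i : Defs.coord (x + y) i = Defs.coord x i + Defs.coord y i.
Proof. by rewrite /Defs.coord; case: (insub i) => [a|]; rewrite ?mxE ?addr0. Qed.

Lemma projdE v (i : 'I_n) : projd v 0 i = v 0 (widen_ord (leqnSn n) i).
Proof. by rewrite mxE (coordE v (leqW (ltn_ord i))); congr (v 0 _); apply: val_inj. Qed.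

Lemma lastcE v : lastc v = v 0 ord_max.
Proof. by rewrite /lastc /= (coordE v (ltnSn n)); congr (v 0 _); apply: val_inj. Qed.

Lemma projdB u v : projd (u - v) = projd u - projd v.
Proof. apply/matrixP => i j; by rewrite !mxE coordB. Qed.

Lemma lastcB u v : lastc (u - v) = lastc u - lastc v.
Proof. by rewrite !lastcE !mxE. Qed.

Lemma lastcD u v : lastc (u + v) = lastc u + lastc v.
Proof. by rewrite !lastcE !mxE. Qed.

Lemma projdD u v : projd (u + v) = projd u + projd v.
Proof. apply/matrixP => i j; by rewrite !mxE coordD. Qed.

Lemma ssq_split v : ssq v = ssq (projd v) + lastc v ^+ 2.
Proof.
rewrite /ssq big_ord_recr /= lastcE; congr (_ + _).
by apply: eq_bigr => i _; rewrite projdE.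
Qed.

Lemma enorm_projd v : enorm (projd v) <= enorm v.
Proof.
apply: enorm_ge; rewrite enorm_sq ssq_split lerDl; exact: sqr_ge0.
Qed.

Lemma lastc_enorm v : `|lastc v| <= enorm v.
Proof. rewrite lastcE; exact: coord_le_enorm. Qed.

Lemma enorm_split v : enorm v <= enorm (projd v) + `|lastc v|.
Proof.
apply: enorm_le; first by rewrite addr_ge0 ?enorm_ge0.
rewrite ssq_split sqrrD -enorm_sq real_normK ?num_real //.
have := enorm_ge0 (projd v); have := normr_ge0 (lastc v); nra.
Qed.

Definition mkv y (t : R) : 'rV[R]_n.+1 :=
  \row_(i < n.+1) (if (i < n)%N then Defs.coord y i else t).

Lemma projd_mkv y t : projd (mkv y t) = y.
Proof.
apply/matrixP => i j; rewrite (ord1 i) projdE !mxE /= ltn_ord.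
by rewrite coord_ord.
Qed.

Lemma lastc_mkv y t : lastc (mkv y t) = t.
Proof. by rewrite lastcE mxE /= ltnn. Qed.

Lemma vec_ext u v : projd u = projd v -> lastc u = lastc v -> u = v.
Proof.
move=> h1 h2; apply/matrixP => i j; rewrite (ord1 i).
case: (unliftP ord_max j) => [k ->|->].
  have := congr1 (fun w : 'M_(1, n) => w 0 k) h1; rewrite !projdE.
  by have -> : widen_ord (leqnSn n) k = lift ord_max k by apply: val_inj => /=; rewrite /bump leqNgt ltn_ord.
by rewrite -!lastcE.
Qed.

End Split.

Section Supn.
Variable R : realType.
Variable n : nat.
Implicit Types (u v w : 'rV[R]_n).

Definition supn v : R := \big[Num.max/0]_(i < n) `|v 0 i|.

Lemma supn_ge0 v : 0 <= supn v.
Proof. by apply: (big_ind (fun x => 0 <= x)) => // x y hx hy; rewrite le_max hx. Qed.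

Lemma coord_le_supn v i : `|v 0 i| <= supn v.
Proof. by rewrite /supn (bigD1 i) //= le_max lexx. Qed.

Lemma supn_le v c : 0 <= c -> (forall i, `|v 0 i| <= c) -> supn v <= c.
Proof. by move=> c0 h; apply: bigmax_le. Qed.

Lemma supn_le_enorm v : supn v <= enorm v.
Proof. apply: supn_le; [exact: enorm_ge0 | move=> i; exact: coord_le_enorm]. Qed.

Lemma supnB u v : supn (u - v) = supn (v - u).
Proof. by apply: eq_bigr => i _; rewrite !mxE -normrN opprB. Qed.

Lemma supnDB u v w : supn (u - w) <= supn (u - v) + supn (v - w).
Proof.
apply: supn_le; first by rewrite addr_ge0 ?supn_ge0.
move=> i.
have -> : (u - w) 0 i = (u - v) 0 i + (v - w) 0 i by rewrite !mxE; ring.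
apply: le_trans (ler_normD _ _) _; apply: lerD; exact: coord_le_supn.
Qed.

Lemma supn0 : supn (0 : 'rV[R]_n) = 0.
Proof. apply/le_anti/andP; split; last exact: supn_ge0.
apply: supn_le => // i; by rewrite mxE normr0. Qed.

End Supn.



Section Bump.
Variable R : realType.
Variables (T I : Type) (dist : T -> T -> R).
Hypothesis dist_tri : forall a b c, dist a c <= dist a b + dist b c.
Hypothesis dist_sym : forall a b, dist a b = dist b a.
Hypothesis dist_refl : forall a, dist a a = 0.
Variable r : R.
Hypothesis r_gt0 : 0 < r.
Variables (P : I -> Prop) (c : I -> T).
Hypothesis sep : forall i j, P i -> P j -> i <> j -> 2 * r <= dist (c i) (c j).

Definition bnear (z : T) : option I :=
  match pselect (exists i, P i /\ dist z (c i) < r) with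
  | left h => Some (proj1_sig (cid h))
  | right _ => None
  end.

Definition bv (z : T) : R :=
  match bnear z with Some i => 1 - dist z (c i) / r | None => 0 end.

Lemma near_some z i : bnear z = Some i -> P i /\ dist z (c i) < r.
Proof.
rewrite /bnear; case: pselect => // h [<-]; exact: (proj2_sig (cid h)).
Qed.

Lemma near_none z : bnear z = None -> forall i, P i -> r <= dist z (c i).
Proof.
rewrite /bnear; case: pselect => // h _ i Pi; rewrite leNgt; apply/negP => H.
by apply: h; exists i.
Qed.

Lemma near_uniq z i : P i -> dist z (c i) < r -> bnear z = Some i.
Proof.
move=> Pi di; case E: (bnear z) => [j|].
  have [Pj dj] := near_some E; case: (pselect (i = j)) => [->//|ne].
  exfalso; have := sep Pi Pj ne; have := dist_tri (c i) z (c j); rewrite (dist_sym (c i) z); lra.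
by exfalso; have := near_none E Pi; lra.
Qed.

Lemma near_c i : P i -> bnear (c i) = Some i.
Proof. by move=> Pi; apply: near_uniq; rewrite // dist_refl. Qed.

Lemma bv_c i : P i -> bv (c i) = 1.
Proof. by move=> Pi; rewrite /bv near_c // dist_refl mul0r subr0. Qed.

Lemma bv_ge0 z : 0 <= bv z.
Proof.
rewrite /bv; case E: (bnear z) => [i|] //.
have [_ h] := near_some E; rewrite subr_ge0 ler_pdivrMr // mul1r; exact: ltW.
Qed.

Lemma bv_le1 z : bv z <= 1.
Proof.
have dg : forall a b, 0 <= dist a b.
  by move=> a b; have := dist_tri a b a; rewrite dist_refl (dist_sym b a); lra.
rewrite /bv; case: (bnear z) => [i|] //.
by rewrite lerBlDr lerDl divr_ge0 // ltW.
Qed.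

Lemma bv_same z w i : bnear z = Some i -> bnear w = Some i ->
  `|bv z - bv w| <= dist z w / r.
Proof.
move=> hz hw; rewrite /bv hz hw.
have -> : 1 - dist z (c i) / r - (1 - dist w (c i) / r) =
   (dist w (c i) - dist z (c i)) / r by field; rewrite lt0r_neq0.
rewrite normrM [`|r^-1|]gtr0_norm ?invr_gt0 // ler_pM2r ?invr_gt0 //.
have := dist_tri w z (c i); have := dist_tri z w (c i); rewrite (dist_sym w z).
move=> h1 h2; rewrite ler_norml; apply/andP; split; lra.
Qed.

Lemma bv_diff z w : bnear z <> bnear w -> bv z + bv w <= dist z w / r.
Proof.
move=> ne; rewrite /bv.
case Ez: (bnear z) => [i|]; case Ew: (bnear w) => [j|]; rewrite Ez Ew in ne.
- have [Pi di] := near_some Ez; have [Pj dj] := near_some Ew.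
  have ij : i <> j by move=> e; apply: ne; rewrite e.
  have := sep Pi Pj ij.
  have := dist_tri (c i) z (c j); have := dist_tri z w (c j).
  rewrite (dist_sym (c i) z) => h1 h2 h3.
  rewrite -(ler_pM2r r_gt0) ?mulrDl ?mulNr ?mul1r ?mul0r !divfK ?lt0r_neq0 //; lra.
- have [Pi di] := near_some Ez; have := near_none Ew Pi.
  have := dist_tri w z (c i); rewrite (dist_sym w z) => h1 h2.
  rewrite -(ler_pM2r r_gt0) ?mulrDl ?mulNr ?mul1r ?mul0r !divfK ?lt0r_neq0 //; lra.
- have [Pj dj] := near_some Ew; have := near_none Ez Pj.
  have := dist_tri z w (c j) => h1 h2.
  rewrite -(ler_pM2r r_gt0) ?mulrDl ?mulNr ?mul1r ?mul0r !divfK ?lt0r_neq0 //; lra.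
- by case: ne.
Qed.

Lemma dist_ge0 a b : 0 <= dist a b.
Proof. by have := dist_tri a b a; rewrite dist_refl (dist_sym b a); lra. Qed.

Lemma bump_scalar_lip (g : I -> R) G : 0 <= G ->
  (forall i, P i -> `|g i| <= G) ->
  forall z w,
  `|(match bnear z with Some i => bv z * g i | None => 0 end) -
    (match bnear w with Some i => bv w * g i | None => 0 end)| <= G * (dist z w / r).
Proof.
move=> G0 hg z w.
have rhs0 : 0 <= G * (dist z w / r) by rewrite mulr_ge0 // divr_ge0 ?dist_ge0 // ltW.
case: (pselect (bnear z = bnear w)) => [e|ne].
  rewrite -e; case Ez: (bnear z) => [i|]; last by rewrite subrr normr0.
  have [Pi _] := near_some Ez.
  rewrite -mulrBl normrM mulrC; apply: ler_pM; [exact: normr_ge0|exact: normr_ge0|exact: hg|].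
  by apply: (bv_same Ez); rewrite -e.
have hb := bv_diff ne.
have key : forall v i, bnear v = Some i -> `|bv v * g i| <= G * bv v.
  move=> v i Ev; have [Pi _] := near_some Ev.
  by rewrite normrM (ger0_norm (bv_ge0 v)) mulrC ler_wpM2r ?bv_ge0 ?hg.
apply: le_trans (ler_normB _ _) _.
case Ez: (bnear z) => [i|]; case Ew: (bnear w) => [j|]; rewrite ?normr0.
- apply: le_trans (lerD (key _ _ Ez) (key _ _ Ew)) _.
  by rewrite -mulrDr ler_wpM2l.
- rewrite addr0; apply: le_trans (key _ _ Ez) _.
  rewrite ler_wpM2l //; move: hb; rewrite {2}/bv Ew addr0 //.
- rewrite add0r; apply: le_trans (key _ _ Ew) _.
  rewrite ler_wpM2l //; move: hb; rewrite {1}/bv Ez add0r //.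
- by case: ne; rewrite Ez Ew.
Qed.

End Bump.



Ltac cmp x y := let h := fresh "h" in let h' := fresh "h" in
  case: (boolP (x <= y)) => h;
  [have h' : x <= y by exact: h | have h' : y < x by rewrite ltNge; exact: h]; clear h.

Section PL.
Variable R : realType.
Variables (a b tx m : R).

Definition q0 (t : R) := if t <= a then t else a.
Definition q1 (t : R) := if t <= a then a else if t <= tx then t else tx.
Definition q2 (t : R) := if t <= tx then tx else if t <= b then t else b.
Definition q3 (t : R) := if t <= b then b else t.
Definition sg1 := (m - a) / (tx - a).
Definition sg2 := (b - m) / (b - tx).
Definition hpl (t : R) := q0 t + sg1 * (q1 t - a) + sg2 * (q2 t - tx) + (q3 t - b).

Hypothesis atx : a < tx.
Hypothesis txb : tx < b.

Lemma q_sum (t : R) : q0 t + (q1 t - a) + (q2 t - tx) + (q3 t - b) = t.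
Proof.
have A1 := atx; have A2 := txb.
rewrite /q0 /q1 /q2 /q3.
cmp t a; cmp t tx; cmp t b; lra.
Qed.

Lemma q_mono (t u : R) : t <= u ->
  [/\ q0 t <= q0 u, q1 t <= q1 u, q2 t <= q2 u & q3 t <= q3 u].
Proof.
have A1 := atx; have A2 := txb.
move=> tu; rewrite /q0 /q1 /q2 /q3; split.
- cmp t a; cmp u a; lra.
- cmp t a; cmp u a; cmp t tx; cmp u tx; lra.
- cmp t tx; cmp u tx; cmp t b; cmp u b; lra.
- cmp t b; cmp u b; lra.
Qed.

Lemma hpl_slope (lo hi t u : R) : t <= u -> 0 <= lo -> lo <= 1 -> 1 <= hi ->
  lo <= sg1 <= hi -> lo <= sg2 <= hi ->
  lo * (u - t) <= hpl u - hpl t <= hi * (u - t).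
Proof.
have A1 := atx; have A2 := txb.
move=> tu lo0 lo1 hi1 /andP[s1l s1h] /andP[s2l s2h].
have [m0 m1 m2 m3] := q_mono tu.
have e : u - t = (q0 u - q0 t) + (q1 u - q1 t) + (q2 u - q2 t) + (q3 u - q3 t).
  by have := q_sum t; have := q_sum u; lra.
have d : hpl u - hpl t = (q0 u - q0 t) + sg1 * (q1 u - q1 t) + sg2 * (q2 u - q2 t)
   + (q3 u - q3 t) by rewrite /hpl; ring.
rewrite d e.
set D0 := q0 u - q0 t; set D1 := q1 u - q1 t; set D2 := q2 u - q2 t; set D3 := q3 u - q3 t.
have D0p : 0 <= D0 by rewrite subr_ge0.
have D1p : 0 <= D1 by rewrite subr_ge0.
have D2p : 0 <= D2 by rewrite subr_ge0.
have D3p : 0 <= D3 by rewrite subr_ge0.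
have h1 : 0 <= (1 - lo) * D0 by apply: mulr_ge0 => //; lra.
have h2 : 0 <= (1 - lo) * D3 by apply: mulr_ge0 => //; lra.
have h3 : 0 <= (sg1 - lo) * D1 by apply: mulr_ge0 => //; lra.
have h4 : 0 <= (sg2 - lo) * D2 by apply: mulr_ge0 => //; lra.
have h5 : 0 <= (hi - 1) * D0 by apply: mulr_ge0 => //; lra.
have h6 : 0 <= (hi - 1) * D3 by apply: mulr_ge0 => //; lra.
have h7 : 0 <= (hi - sg1) * D1 by apply: mulr_ge0 => //; lra.
have h8 : 0 <= (hi - sg2) * D2 by apply: mulr_ge0 => //; lra.
apply/andP; split; nra.
Qed.

Lemma hpl_out (t : R) : (t <= a) \/ (b <= t) -> hpl t = t.
Proof.
have A1 := atx; have A2 := txb.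
have e1 : sg1 * (tx - a) = m - a by rewrite /sg1 divfK // subr_eq0 gt_eqF.
have e2 : sg2 * (b - tx) = b - m by rewrite /sg2 divfK // subr_eq0 gt_eqF.
rewrite /hpl /q0 /q1 /q2 /q3 => -[h|h].
  by rewrite h (le_trans h (ltW atx)) (le_trans h (ltW (lt_trans atx txb))) !subrr !mulr0; lra.
have hb : ~~ (t <= a) by rewrite -ltNge (lt_le_trans (lt_trans atx txb) h).
have htx : ~~ (t <= tx) by rewrite -ltNge (lt_le_trans txb h).
rewrite (negbTE hb) (negbTE htx).
case: (boolP (t <= b)) => h2; last lra.
have -> : t = b by apply/le_anti; rewrite h h2.
lra.
Qed.

Lemma hpl_tx : hpl tx = m.
Proof.
have A1 := atx; have A2 := txb.
have e1 : sg1 * (tx - a) = m - a by rewrite /sg1 divfK // subr_eq0 gt_eqF.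
rewrite /hpl /q0 /q1 /q2 /q3 lexx (ltW txb).
rewrite (negbTE (_ : ~~ (tx <= a))) ?subrr ?mulr0 -?ltNge //; lra.
Qed.

Lemma hpl_dev (lo hi t : R) : 0 <= lo -> lo <= 1 -> 1 <= hi ->
  lo <= sg1 <= hi -> lo <= sg2 <= hi -> `|hpl t - t| <= b - a.
Proof.
have A1 := atx; have A2 := txb.
move=> lo0 lo1 hi1 hs1 hs2.
cmp t a; first by rewrite hpl_out ?subrr ?normr0; [lra|left].
cmp b t; first by rewrite hpl_out ?subrr ?normr0; [lra|right].
have ha := hpl_out (or_introl (lexx a)).
have hb := hpl_out (or_intror (lexx b)).
have /andP[k1 _] := hpl_slope (ltW h0) lo0 lo1 hi1 hs1 hs2.
have /andP[k2 _] := hpl_slope (ltW h1) lo0 lo1 hi1 hs1 hs2.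
have p1 : 0 <= lo * (t - a) by apply: mulr_ge0; lra.
have p2 : 0 <= lo * (b - t) by apply: mulr_ge0; lra.
rewrite ha in k1; rewrite hb in k2.
rewrite ler_norml; apply/andP; split; lra.
Qed.

End PL.



Lemma digits_inj (M L j j' : nat) : (0 < M)%N -> (j < M ^ L)%N -> (j' < M ^ L)%N ->
  (forall i, (i < L)%N -> (j %/ M ^ i) %% M = (j' %/ M ^ i) %% M)%N -> j = j'.
Proof.
move=> M0; elim: L j j' => [|L IH] j j' hj hj' h.
  by move: hj hj'; rewrite expn0 !ltnS !leqn0 => /eqP-> /eqP->.
have h0 := h 0%N (ltn0Sn L); rewrite !expn0 !divn1 in h0.
have q : (j %/ M = j' %/ M)%N.
  apply: IH.
  - by rewrite ltn_divLR // -expnSr.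
  - by rewrite ltn_divLR // -expnSr.
  - move=> i hi; rewrite -!divnMA -expnS; exact: (h i.+1 hi).
by rewrite (divn_eq j M) (divn_eq j' M) q h0.
Qed.

Section Grid.
Variables (R : realType) (k M : nat) (N s : R).

Definition KK : nat := (2 * M)%N.
Definition cellc (y : 'rV[R]_k.+1) (i : 'I_k.+1) : int := Num.floor (y 0 i * N / KK%:R).
Definition bucket (t : R) : nat := Num.truncn (2 * t / s).
Definition dig (t : R) (i : nat) : nat := ((bucket t %/ M ^ i) %% M)%N.
Definition isint (r : R) : bool := `[< exists z : int, r = z%:~R >].
Definition num0 y t : int := KK%:Z * cellc y ord0 + (2 * dig t 0)%N%:Z.
Definition epsb y t : bool := isint ((num0 y t)%:~R / N).
Definition offs y t (i : 'I_k.+1) : nat :=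
  (2 * dig t i + (if i == ord0 then nat_of_bool (epsb y t) else 0))%N.
Definition numz y t i : int := KK%:Z * cellc y i + (offs y t i)%:Z.
Definition gp y t : 'rV[R]_k.+1 := \row_i ((numz y t i)%:~R / N).

Lemma offs_lt y t i : (0 < M)%N -> (offs y t i < KK)%N.
Proof.
move=> M0; have : (dig t i < M)%N by rewrite /dig ltn_pmod.
rewrite /offs /KK; case: (i == ord0); case: (epsb y t) => /=; lia.
Qed.

Lemma gp_lattice y t : in_scaled_lattice N (gp y t).
Proof. by move=> i; exists (numz y t i); rewrite mxE. Qed.

Lemma gp_notlattice y t : 1 < N -> ~ in_lattice (gp y t).
Proof.
move=> N1 h; have [z hz] := h ord0; move: hz; rewrite mxE.
have N0 : N != 0 by rewrite gt_eqF // (lt_trans ltr01).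
have -> : numz y t ord0 = num0 y t + (epsb y t)%:Z.
  by rewrite /numz /offs /num0 eqxx PoszD addrA.
rewrite /epsb; case: (boolP (isint _)) => /= hi.
- move: (hi) => /asboolP [z0 hz0] hz.
  have : (z - z0)%:~R = 1 / N :> R.
    rewrite rmorphB /= -hz -hz0 rmorphD /= mulr1z; by field.
  move=> e.
  have lt1 : 1 / N < 1 by rewrite ltr_pdivrMr ?mul1r // (lt_trans ltr01).
  have gt0 : 0 < 1 / N by rewrite divr_gt0 // (lt_trans ltr01).
  rewrite -e in lt1 gt0.
  have a1 : (0 < z - z0)%R by rewrite -(ltr0z R).
  have a2 : (z - z0 < 1)%R by rewrite -(ltrz1 R).
  lia.
- move=> hz; move/negP: hi; apply; apply/asboolP; exists z.
  by rewrite -hz addr0.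
Qed.

Lemma gp_close y t i : 0 < N -> (0 < M)%N ->
  `|gp y t 0 i - y 0 i| < KK%:R / N.
Proof.
move=> N0 M0.
have K0 : 0 < KK%:R :> R by rewrite ltr0n /KK; lia.
have ho := offs_lt y t i M0.
have hoR : (offs y t i)%:R + 1 <= KK%:R :> R by rewrite natr1 ler_nat.
have ho0 : 0 <= (offs y t i)%:R :> R by [].
set A : R := (cellc y i)%:~R.
have [f1 f2] : A <= y 0 i * N / KK%:R /\ y 0 i * N / KK%:R < A + 1.
  have := floor_itv (y 0 i * N / KK%:R); rewrite -/(cellc y i) -/A intrD => /andP[? ?]; by split.
rewrite ler_pdivlMr // in f1; rewrite ltr_pdivrMr // in f2.
have e : gp y t 0 i - y 0 i = (KK%:R * A + (offs y t i)%:R - y 0 i * N) / N.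
  rewrite mxE /numz intrD intrM /= -/A; field; exact: lt0r_neq0.
rewrite e normrM [`|N^-1|]gtr0_norm ?invr_gt0 // ltr_pM2r ?invr_gt0 //.
rewrite ltr_norml; apply/andP; split; nra.
Qed.

Lemma numz_inj y t y' t' i : (0 < M)%N -> numz y t i = numz y' t' i ->
  cellc y i = cellc y' i /\ offs y t i = offs y' t' i.
Proof.
move=> M0; rewrite /numz => e.
have K0 : KK%:Z != 0 by rewrite /KK; apply/eqP; lia.
have o1 := offs_lt y t i M0; have o2 := offs_lt y' t' i M0.
have d1 : ((KK%:Z * cellc y i + (offs y t i)%:Z) %/ KK%:Z)%Z = cellc y i.
  by rewrite mulrC divzMDl // divz_small ?addr0 //; apply/andP; split => //; rewrite ltz_nat.
have d2 : ((KK%:Z * cellc y' i + (offs y' t' i)%:Z) %/ KK%:Z)%Z = cellc y' i.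
  by rewrite mulrC divzMDl // divz_small ?addr0 //; apply/andP; split => //; rewrite ltz_nat.
have c : cellc y i = cellc y' i by rewrite -d1 -d2 e.
split => //; move: e; rewrite c => /addrI; by case.
Qed.

Lemma gp_inj y t y' t' : (0 < M)%N -> 0 < N -> gp y t = gp y' t' ->
  (bucket t < M ^ k.+1)%N -> (bucket t' < M ^ k.+1)%N ->
  (forall i, cellc y i = cellc y' i) /\ bucket t = bucket t'.
Proof.
move=> M0 N0 e b1 b2.
have hz : forall i, numz y t i = numz y' t' i.
  move=> i; have := congr1 (fun v : 'rV[R]_k.+1 => v 0 i) e; rewrite !mxE => h.
  apply/eqP; rewrite -(eqr_int R); apply/eqP.
  by move: h => /(mulIf (invr_neq0 (lt0r_neq0 N0))).
split; first by move=> i; have [] := numz_inj M0 (hz i).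
apply: (digits_inj M0 b1 b2) => i hi.
have := numz_inj M0 (hz (Ordinal hi)) => -[_]; rewrite /offs /=.
rewrite /dig; case: (Ordinal hi == ord0); case: (epsb y t); case: (epsb y' t') => /=; lia.
Qed.

Lemma gp_sep y t y' t' : 0 < N -> gp y t <> gp y' t' ->
  1 / N <= supn (gp y t - gp y' t').
Proof.
move=> N0 ne.
have [i hi] : exists i, gp y t 0 i <> gp y' t' 0 i.
  apply: contrapT => H; apply: ne; apply/matrixP => a b; rewrite (ord1 a).
  by apply: contrapT => H2; apply: H; exists b.
apply: le_trans (coord_le_supn _ i); rewrite mxE.
move: hi; rewrite !mxE => hi.
have nz : numz y t i - numz y' t' i != 0.
  by apply/eqP => h; apply: hi; move/eqP: h; rewrite subr_eq0 => /eqP->.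
have -> : (numz y t i)%:~R / N - (numz y' t' i)%:~R / N =
   (numz y t i - numz y' t' i)%:~R / N :> R by rewrite intrB mulrBl.
rewrite normrM [`|N^-1|]gtr0_norm ?invr_gt0 // ler_pM2r ?invr_gt0 //.
rewrite -intr_norm ler1z; move: nz; set w := (_ - _)%R; lia.
Qed.

End Grid.



Lemma consts (R : realType) (k H : nat) (s N : R) : (1 <= H)%N -> 0 < s -> s <= 1 / 4 ->
  (2 * Num.sqrt ((k.+2)%:R) / s) ^+ 3 * powR (H%:R) (1 / (k.+1)%:R) <= N ->
  let M := Num.truncn (s ^+ 2 * N / (2 * (k.+1)%:R)) in
  [/\ (0 < M)%N, (k.+1)%:R * (2 * M)%N%:R <= s ^+ 2 * N, 1 / s <= N, 1 < N &
      (2 * H%:R + 1) / s < (M ^ k.+1)%N%:R ].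
Proof.
move=> H1 s0 s14 hN M.
set n := k.+1.
have n1 : 1 <= n%:R :> R by rewrite ler1n.
have H1R : 1 <= H%:R :> R by rewrite ler1n.
set Q := powR _ _ in hN.
have Q1 : 1 <= Q.
  rewrite /Q -[X in X <= _](powRr0 (H%:R : R)); apply: (ler_powR H1R).
  by rewrite divr_ge0 // ler0n.
have QH : Q ^+ n = H%:R.
  rewrite /Q -powR_mulrn ?powR_ge0 // -powRrM mul1r mulVf ?powRr1 ?ler0n //.
  by rewrite pnatr_eq0.
have sq : 7 / 5 <= Num.sqrt ((k.+2)%:R) :> R.
  have h2 : Num.sqrt ((k.+2)%:R) ^+ 2 = (k.+2)%:R :> R by rewrite sqr_sqrtr ?ler0n.
  have h0 : 0 <= Num.sqrt ((k.+2)%:R) :> R by apply: sqrtr_ge0.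
  have hk : 2 <= (k.+2)%:R :> R by rewrite ler_nat.
  move: h2 h0 hk; set D := Num.sqrt _ => h2 h0 hk; nra.
set D := Num.sqrt ((k.+2)%:R : R) in hN sq.
have D0 : 0 < D by lra.
have is4 : 4 <= 1 / s by rewrite ler_pdivlMr // ; lra.
have eW : 2 * D / s = 2 * D * (1 / s) by rewrite mul1r.
have W11 : 11 <= 2 * D / s by rewrite eW; nra.
have W1s : 1 / s <= 2 * D / s by rewrite eW; nra.
have cube : (2 * D / s) ^+ 3 <= N.
  apply: le_trans hN; rewrite -{1}(mulr1 (_ ^+ 3)) ler_wpM2l //.
  by rewrite exprn_ge0 // divr_ge0 // ?mulr_ge0 // ltW.
have cube2 : (2 * D / s) ^+ 3 = (2 * D / s) * (2 * D / s) ^+ 2 by rewrite exprS.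
have sq1 : 121 <= (2 * D / s) ^+ 2 by rewrite expr2; nra.
have N1 : 1 / s <= N.
  apply: le_trans cube; rewrite cube2; nra.
have N512 : 32 <= N by apply: le_trans cube; rewrite cube2; nra.
set Y := s ^+ 2 * N / (2 * n%:R).
have Y0 : 0 <= Y by rewrite divr_ge0 ?mulr_ge0 ?sqr_ge0 ?mulr_ge0 ?ler0n // ltW // (lt_le_trans _ N512).
have hM1 : M%:R <= Y by rewrite truncn_le Y0.
have hM2 : Y < M.+1%:R by apply: truncnS_gt.
have Yb : 4 * D * Q / s <= Y.
  have n0 : 0 < 2 * n%:R :> R by rewrite mulr_gt0 // ltr0n.
  rewrite /Y ler_pdivlMr //.
  have X1 : s ^+ 2 * ((2 * D / s) ^+ 3 * Q) = 8 * D ^+ 2 * (D * Q / s).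
    by field; rewrite gt_eqF.
  have X2 : 4 * D * Q / s * (2 * n%:R) = 8 * n%:R * (D * Q / s).
    by field; rewrite gt_eqF.
  have X3 : s ^+ 2 * ((2 * D / s) ^+ 3 * Q) <= s ^+ 2 * N by rewrite ler_wpM2l ?sqr_ge0.
  have Dsq : D ^+ 2 = (k.+2)%:R by rewrite sqr_sqrtr ?ler0n.
  have kn : n%:R <= (k.+2)%:R :> R by rewrite ler_nat.
  have DQ : 0 <= D * Q / s by rewrite divr_ge0 ?mulr_ge0 // ltW // (lt_le_trans ltr01).
  rewrite X2; rewrite X1 Dsq in X3.
  apply: le_trans X3; rewrite ler_wpM2r // ler_pM2l //.
have eu1 : 4 * D * Q / s = 4 * D * (Q / s) by rewrite !mulrA.
have eu2 : 5 * Q / s = 5 * (Q / s) by rewrite mulrA.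
have u4 : 4 <= Q / s.
  have -> : Q / s = Q * (1 / s) by rewrite mul1r.
  nra.
have M5 : 5 * Q / s <= M%:R.
  move: hM2; rewrite -natr1 => hM2.
  rewrite eu2; rewrite eu1 in Yb; nra.
have M20 : 20 <= M%:R :> R by rewrite eu2 in M5; lra.
split.
- by rewrite -(ltr_nat R); lra.
- rewrite natrM /=; have : M%:R * (2 * n%:R) <= s ^+ 2 * N by rewrite -ler_pdivlMr ?mulr_gt0 ?ltr0n.
  lra.
- exact: N1.
- lra.
- rewrite natrX.
  have P1 : (5 * Q / s) ^+ n <= M%:R ^+ n.
    by apply: lerXn2r; rewrite ?nnegrE ?ler0n //; rewrite eu2; lra.
  have P2 : (5 * Q / s) ^+ n = (5 / s) ^+ n * H%:R by rewrite -QH -exprMn; congr (_ ^+ _); field; rewrite gt_eqF.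
  have P3 : 5 / s <= (5 / s) ^+ n by apply: ler_eXnr => //; rewrite ler_pdivlMr //; lra.
  apply: lt_le_trans P1; rewrite P2.
  have : 5 / s * H%:R <= (5 / s) ^+ n * H%:R by rewrite ler_wpM2r ?ler0n.
  have e5 : (2 * H%:R + 1) / s < 5 / s * H%:R.
    by rewrite mulrAC ltr_pM2r ?invr_gt0 //; lra.
  lra.
Qed.



Section VecBump.
Variable R : realType.
Variables (T I : Type) (dist : T -> T -> R).
Hypothesis dist_tri : forall a b c, dist a c <= dist a b + dist b c.
Hypothesis dist_sym : forall a b, dist a b = dist b a.
Hypothesis dist_refl : forall a, dist a a = 0.
Variable r : R.
Hypothesis r_gt0 : 0 < r.
Variables (P : I -> Prop) (c : I -> T).
Hypothesis sep : forall i j, P i -> P j -> i <> j -> 2 * r <= dist (c i) (c j).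

Lemma bump_vec_lip m (g : I -> 'rV[R]_m) (G : R) : 0 <= G ->
  (forall i, P i -> enorm (g i) <= G) ->
  forall z w,
  enorm ((match bnear dist r P c z with Some i => bv dist r P c z *: g i | None => 0 end) -
    (match bnear dist r P c w with Some i => bv dist r P c w *: g i | None => 0 end))
   <= G * (dist z w / r).
Proof.
have rr := r_gt0.
move=> G0 hg z w.
have dg : 0 <= dist z w by have := dist_tri z w z; rewrite dist_refl (dist_sym w z); lra.
have rhs0 : 0 <= G * (dist z w / r) by rewrite mulr_ge0 // divr_ge0 // ltW.
case: (pselect (bnear dist r P c z = bnear dist r P c w)) => [e|ne].
  rewrite -e; case Ez: (bnear dist r P c z) => [i|]; last by rewrite subrr enorm0.
  have [Pi _] := near_some Ez.
  rewrite -scalerBl enormZ mulrC; apply: ler_pM; [exact: enorm_ge0|exact: normr_ge0|exact: hg|].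
  by apply: (bv_same dist_tri dist_sym r_gt0 Ez); rewrite -e Ez.
have hb := bv_diff dist_tri dist_sym r_gt0 sep ne.
have key : forall v i, bnear dist r P c v = Some i -> enorm (bv dist r P c v *: g i) <= G * bv dist r P c v.
  move=> v i Ev; have [Pi _] := near_some Ev.
  by rewrite enormZ (ger0_norm (bv_ge0 dist r_gt0 P c v)) mulrC ler_wpM2r ?(bv_ge0 dist r_gt0) ?hg.
have enN : forall v : 'rV[R]_m, enorm (- v) = enorm v.
  by move=> v; rewrite -scaleN1r enormZ normrN normr1 mul1r.
apply: le_trans (enormD _ _) _; rewrite enN.
case Ez: (bnear dist r P c z) => [i|]; case Ew: (bnear dist r P c w) => [j|]; rewrite ?enorm0.
- apply: le_trans (lerD (key _ _ Ez) (key _ _ Ew)) _.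
  by rewrite -mulrDr ler_wpM2l.
- rewrite addr0; apply: le_trans (key _ _ Ez) _.
  rewrite ler_wpM2l //; move: hb; rewrite {2}/bv Ew addr0 //.
- rewrite add0r; apply: le_trans (key _ _ Ew) _.
  rewrite ler_wpM2l //; move: hb; rewrite {1}/bv Ez add0r //.
- by case: ne; rewrite Ez Ew.
Qed.

End VecBump.



Section Main.
Variables (R : realType) (k H : nat) (s N : R) (X : nat -> set 'rV[R]_k.+2).
Hypothesis hH : (1 <= H)%N.
Hypothesis hs0 : 0 < s.
Hypothesis hs14 : s <= 1 / 4.
Hypothesis hN : (2 * Num.sqrt ((k.+2)%:R) / s) ^+ 3 * powR (H%:R) (1 / (k.+1)%:R) <= N.
Hypothesis hX : forall m x, (1 <= m <= H)%N -> X m x ->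
     1 / 2 + s <= lastc x <= H%:R + 1 / 2 - s.
Hypothesis hdisj : forall m m', (1 <= m <= H)%N -> (1 <= m' <= H)%N -> m <> m' ->
     X m `&` X m' = set0.
Hypothesis hsep : separated s (\bigcup_(m in [set m | (1 <= m <= H)%N]) X m).

Definition XA (x : 'rV[R]_k.+2) := exists m, (1 <= m <= H)%N /\ X m x.
Definition MM : nat := Num.truncn (s ^+ 2 * N / (2 * (k.+1)%:R)).
Definition pm (x : 'rV[R]_k.+2) : 'rV[R]_k.+1 := gp MM N s (projd x) (lastc x).

Lemma cst : [/\ (0 < MM)%N, (k.+1)%:R * (2 * MM)%N%:R <= s ^+ 2 * N, 1 / s <= N, 1 < N &
      (2 * H%:R + 1) / s < (MM ^ k.+1)%N%:R ].
Proof. exact: (consts hH hs0 hs14 hN). Qed.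

Lemma N0 : 0 < N.
Proof. have [_ _ _ h _] := cst; exact: lt_trans ltr01 h. Qed.

Lemma sepA x y : XA x -> XA y -> x <> y -> s <= enorm (x - y).
Proof.
move=> [m [hm Xm]] [m' [hm' Xm']] ne; apply: hsep => //.
- by exists m.
- by exists m'.
Qed.

Lemma XA_range x : XA x -> 1 / 2 + s <= lastc x <= H%:R + 1 / 2 - s.
Proof. by move=> [m [hm Xm]]; exact: hX Xm. Qed.

Definition mof (x : 'rV[R]_k.+2) : nat :=
  match pselect (exists m, (1 <= m <= H)%N /\ X m x) with
  | left h => proj1_sig (cid h) | right _ => 0%N end.

Lemma mof_spec x : XA x -> (1 <= mof x <= H)%N /\ X (mof x) x.
Proof. rewrite /mof; case: pselect => // h _; exact: (proj2_sig (cid h)). Qed.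

Lemma mof_uniq x m : (1 <= m <= H)%N -> X m x -> mof x = m.
Proof.
move=> hm Xm; have [h1 h2] := mof_spec (ex_intro _ m (conj hm Xm)).
apply: contrapT => ne.
have := hdisj h1 hm ne; move/seteqP => [+ _] => /(_ x (conj h2 Xm)); by [].
Qed.

Lemma pm_close x : enorm (pm x - projd x) <= s ^+ 2.
Proof.
have [M0 MK _ _ _] := cst; have hN0 := N0; have s0 := hs0.
apply: enorm_le; first exact: sqr_ge0.
have K0 : 0 < (2 * MM)%N%:R :> R by rewrite ltr0n; lia.
set KN := (2 * MM)%N%:R / N.
have KN0 : 0 <= KN by rewrite /KN divr_ge0 // ?ler0n // ltW.
have b : forall i, (pm x - projd x) 0 i ^+ 2 <= KN ^+ 2.
  move=> i; rewrite -real_normK ?num_real //; apply: lerXn2r.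
  - by rewrite nnegrE normr_ge0.
  - by rewrite nnegrE.
  have -> : (pm x - projd x) 0 i = pm x 0 i - projd x 0 i by rewrite !mxE.
  exact: (ltW (@gp_close R k MM N s (projd x) (lastc x) i hN0 M0)).
apply: le_trans (ler_sum _ (fun i _ => b i)) _.
rewrite sumr_const card_ord -mulr_natl.
have e : KN <= s ^+ 2 / (k.+1)%:R.
  rewrite /KN ler_pdivrMr // mulrAC ler_pdivlMr ?ltr0n //.
  by rewrite mulrC.
have e2 : KN ^+ 2 <= (s ^+ 2 / (k.+1)%:R) ^+ 2.
  apply: lerXn2r => //; rewrite nnegrE // divr_ge0 ?sqr_ge0 ?ler0n //.
apply: le_trans (ler_wpM2l (ler0n _ _) e2) _.
have n1 : 1 <= (k.+1)%:R :> R by rewrite ler1n.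
rewrite expr_div_n -exprM /=.
have -> : (k.+1)%:R * (s ^+ 4 / (k.+1)%:R ^+ 2) = s ^+ 4 / (k.+1)%:R :> R.
  field; apply: lt0r_neq0; have : 0 <= k%:R :> R by []. lra.
have -> : (2 * 2)%N = 4%N by [].
rewrite ler_pdivrMr ?(lt_le_trans ltr01) //.
have : 0 <= s ^+ 4 by rewrite exprn_ge0 // ltW.
nra.
Qed.

Lemma bucket_lt x : XA x -> (bucket s (lastc x) < MM ^ k.+1)%N.
Proof.
move=> hx; have [_ _ _ _ hb] := cst; have /andP[t1 t2] := XA_range hx.
have s0 := hs0.
have z : 0 <= 2 * lastc x / s by rewrite divr_ge0 ?ltW //; lra.
have b1 : (bucket s (lastc x))%:R <= 2 * lastc x / s by rewrite /bucket truncn_le z.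
have b2 : 2 * lastc x / s < (2 * H%:R + 1) / s by rewrite ltr_pM2r ?invr_gt0 //; lra.
by rewrite -(ltr_nat R); apply: le_lt_trans b1 (lt_trans b2 hb).
Qed.

Lemma cell_close (y y' : 'rV[R]_k.+1) i : cellc MM N y i = cellc MM N y' i ->
  `|y 0 i - y' 0 i| < (2 * MM)%N%:R / N.
Proof.
have [M0 _ _ _ _] := cst; have hN0 := N0.
have K0 : 0 < (2 * MM)%N%:R :> R by rewrite ltr0n; lia.
rewrite /cellc => e.
have := floor_itv (y 0 i * N / (KK MM)%:R); have := floor_itv (y' 0 i * N / (KK MM)%:R).
rewrite e intrD /= /KK; set c := (Num.floor _)%:~R => /andP[a1 a2] /andP[a3 a4].
have h : `|y 0 i * N / (2 * MM)%N%:R - y' 0 i * N / (2 * MM)%N%:R| < 1.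
  rewrite ltr_norml; apply/andP; split; lra.
have -> : y 0 i - y' 0 i = (y 0 i * N / (2 * MM)%N%:R - y' 0 i * N / (2 * MM)%N%:R) * ((2 * MM)%N%:R / N).
  by field; rewrite gt_eqF // pnatr_eq0 -lt0n.
rewrite normrM (ger0_norm (divr_ge0 (ltW K0) (ltW hN0))).
rewrite -{2}(mul1r ((2 * MM)%N%:R / N)) ltr_pM2r // divr_gt0 //.
Qed.

Lemma bucket_close t u : 0 <= t -> 0 <= u -> bucket s t = bucket s u -> `|t - u| < s / 2.
Proof.
have s0 := hs0.
move=> t0 u0 e.
have z1 : 0 <= 2 * t / s by rewrite divr_ge0 ?mulr_ge0 // ltW.
have z2 : 0 <= 2 * u / s by rewrite divr_ge0 ?mulr_ge0 // ltW.
have a1 : (bucket s t)%:R <= 2 * t / s by rewrite /bucket truncn_le z1.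
have a2 : 2 * t / s < (bucket s t).+1%:R by apply: truncnS_gt.
have a3 : (bucket s u)%:R <= 2 * u / s by rewrite /bucket truncn_le z2.
have a4 : 2 * u / s < (bucket s u).+1%:R by apply: truncnS_gt.
rewrite -e -natr1 in a3 a4; rewrite -natr1 in a2.
have h : `|2 * t / s - 2 * u / s| < 1 by rewrite ltr_norml; apply/andP; split; lra.
have -> : t - u = (2 * t / s - 2 * u / s) * (s / 2) by field; rewrite gt_eqF.
rewrite normrM (ger0_norm (divr_ge0 (ltW s0) (ler0n _ 2))).
rewrite -{2}(mul1r (s / 2)) ltr_pM2r // divr_gt0 //.
Qed.

Lemma pm_inj x y : XA x -> XA y -> pm x = pm y -> x = y.
Proof.
move=> hx hy e; apply: contrapT => ne.
have [M0 MK _ _ _] := cst; have hN0 := N0; have s0 := hs0; have s14 := hs14.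
have [hc hb] := gp_inj M0 hN0 e (bucket_lt hx) (bucket_lt hy).
have /andP[tx1 _] := XA_range hx; have /andP[ty1 _] := XA_range hy.
have ht := bucket_close (t:=lastc x) (u:=lastc y) ltac:(lra) ltac:(lra) hb.
have hs := sepA hx hy ne.
have : enorm (x - y) < s.
  have K0 : 0 < (2 * MM)%N%:R :> R by rewrite ltr0n; lia.
  set KN := (2 * MM)%N%:R / N.
  have KN0 : 0 <= KN by rewrite /KN divr_ge0 // ?ler0n // ltW.
  have e1 : KN <= s ^+ 2 / (k.+1)%:R.
    rewrite /KN ler_pdivrMr // mulrAC ler_pdivlMr ?ltr0n //.
    by rewrite mulrC.
  have n1 : 1 <= (k.+1)%:R :> R by rewrite ler1n.
  have e2 : KN <= s ^+ 2.
    apply: le_trans e1 _; rewrite ler_pdivrMr ?(lt_le_trans ltr01) //.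
    have := sqr_ge0 s; nra.
  have b : forall i, projd (x - y) 0 i ^+ 2 <= KN ^+ 2.
    move=> i; rewrite -real_normK ?num_real //; apply: lerXn2r.
    - by rewrite nnegrE normr_ge0.
    - by rewrite nnegrE.
    rewrite projdB.
    have -> : (projd x - projd y) 0 i = projd x 0 i - projd y 0 i by rewrite !mxE.
    exact: ltW (cell_close (hc i)).
  have sq : ssq (x - y) <= (k.+1)%:R * KN ^+ 2 + (lastc x - lastc y) ^+ 2.
    rewrite ssq_split lastcB lerD2r /ssq.
    apply: le_trans (ler_sum _ (fun i _ => b i)) _.
    by rewrite sumr_const card_ord mulr_natl.
  have sq2 : (lastc x - lastc y) ^+ 2 < (s / 2) ^+ 2.
    by rewrite -real_normK ?num_real // ltrXn2r.
  have sq3 : (k.+1)%:R * KN ^+ 2 <= s ^+ 2 * KN.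
    have : (k.+1)%:R * KN <= s ^+ 2.
      by move: e1; rewrite ler_pdivlMr ?(lt_le_trans ltr01) // mulrC.
    move=> h; rewrite expr2 mulrA; apply: ler_wpM2r => //.
  have sq4 : s ^+ 2 * KN <= s ^+ 4 by rewrite (_ : s ^+ 4 = s ^+ 2 * s ^+ 2) ?ler_wpM2l ?sqr_ge0 // -exprD.
  have s4 : s ^+ 4 + (s / 2) ^+ 2 < s ^+ 2.
    have -> : s ^+ 4 = s ^+ 2 * s ^+ 2 by rewrite -exprD.
    have : s ^+ 2 <= 1 / 16 by have := sqr_ge0 s; nra.
    have : 0 < s ^+ 2 by rewrite exprn_gt0.
    rewrite (_ : (s / 2) ^+ 2 = s ^+ 2 / 4); last by field.
    nra.
  rewrite /enorm -/(ssq (x - y)) -(gtr0_norm s0) -sqrtr_sqr ltr_sqrt ?exprn_gt0 //; lra.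
lra.
Qed.

Lemma sep2 x y : XA x -> XA y -> x <> y -> 2 * (1 / (2 * N)) <= supn (pm x - pm y).
Proof.
move=> hx hy ne; have hN0 := N0.
have -> : 2 * (1 / (2 * N)) = 1 / N by field; rewrite gt_eqF.
apply: gp_sep => // e; apply: ne; exact: pm_inj.
Qed.

Lemma frac_bounds (p q : R) : 1 / 2 <= p <= H%:R -> s <= q <= H%:R ->
  1 / (2 * H%:R) <= p / q <= H%:R / s.
Proof.
have s0 := hs0; have H1 : 1 <= H%:R :> R by rewrite ler1n.
move=> /andP[p1 p2] /andP[q1 q2].
have q0 : 0 < q by lra.
apply/andP; split.
- rewrite ler_pdivrMr ?mulr_gt0 //; last lra.
  rewrite mulrC mulrA ler_pdivlMr //.
  nra.
- rewrite ler_pdivrMr // mulrAC ler_pdivlMr //; nra.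
Qed.

Lemma enormN n (v : 'rV[R]_n) : enorm (- v) = enorm v.
Proof. by rewrite -scaleN1r enormZ normrN normr1 mul1r. Qed.

Lemma enormDN n (u v : 'rV[R]_n) : enorm (u - v) <= enorm u + enorm v.
Proof. by rewrite -(enormN v); exact: enormD. Qed.

Lemma enorm_mkv0 (v : 'rV[R]_k.+1) : enorm (mkv v 0) = enorm v.
Proof. by rewrite /enorm -/(ssq _) -/(ssq v) ssq_split projd_mkv lastc_mkv expr0n addr0. Qed.

Definition d1 (a b : 'rV[R]_k.+2) := enorm (a - b).
Definition vsh x : 'rV[R]_k.+2 := mkv (pm x - projd x) 0.
Definition fb z : 'rV[R]_k.+2 :=
  match bnear d1 (s / 2) XA id z with
  | Some x => bv d1 (s / 2) XA id z *: vsh x | None => 0 end.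
Definition S1 (z : 'rV[R]_k.+2) := z + fb z.

Lemma d1_tri a b c : d1 a c <= d1 a b + d1 b c. Proof. exact: enormDB. Qed.
Lemma d1_sym a b : d1 a b = d1 b a. Proof. exact: enormB. Qed.
Lemma d1_refl a : d1 a a = 0. Proof. by rewrite /d1 subrr enorm0. Qed.
Lemma r1_gt0 : 0 < s / 2. Proof. by rewrite divr_gt0. Qed.
Lemma sep1 i j : XA i -> XA j -> i <> j -> 2 * (s / 2) <= d1 (id i) (id j).
Proof. move=> hi hj ne; rewrite mulrC divfK ?pnatr_eq0 //; exact: sepA. Qed.

Lemma vsh_norm x : XA x -> enorm (vsh x) <= s ^+ 2.
Proof. by move=> _; rewrite /vsh enorm_mkv0; exact: pm_close. Qed.

Lemma fb_lip z w : enorm (fb z - fb w) <= 1 / 2 * enorm (z - w).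
Proof.
have s0 := hs0; have s14 := hs14.
have h := bump_vec_lip d1_tri d1_sym d1_refl r1_gt0 sep1 (g := vsh) (G := s ^+ 2)
  (sqr_ge0 s) vsh_norm z w.
apply: le_trans h _; rewrite /d1.
have -> : s ^+ 2 * (enorm (z - w) / (s / 2)) = (2 * s) * enorm (z - w) by field; rewrite gt_eqF.
apply: ler_wpM2r; [exact: enorm_ge0|lra].
Qed.

Lemma S1_diff z w : S1 z - S1 w = (z - w) + (fb z - fb w).
Proof. by rewrite /S1 opprD addrACA. Qed.

Lemma S1_fwd z w : enorm (S1 z - S1 w) <= 3 / 2 * enorm (z - w).
Proof.
rewrite S1_diff; apply: le_trans (enormD _ _) _; have := fb_lip z w; lra.
Qed.

Lemma S1_inv z w : enorm (z - w) <= 2 * enorm (S1 z - S1 w).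
Proof.
have e : z - w = (S1 z - S1 w) - (fb z - fb w) by rewrite S1_diff addrK.
have := enormDN (S1 z - S1 w) (fb z - fb w); rewrite -e.
have := fb_lip z w; lra.
Qed.

Lemma S1_X x : XA x -> S1 x = mkv (pm x) (lastc x).
Proof.
move=> hx.
have n1 : bnear d1 (s / 2) XA id x = Some x := near_c d1_tri d1_sym d1_refl r1_gt0 sep1 hx.
have b1 : bv d1 (s / 2) XA id x = 1 := bv_c d1_tri d1_sym d1_refl r1_gt0 sep1 hx.
rewrite /S1 /fb n1 b1 scale1r /vsh.
apply: vec_ext; first by rewrite projdD !projd_mkv addrC subrK.
by rewrite lastcD !lastc_mkv addr0.
Qed.

Lemma S1_out z : ~ (1 / 2 < lastc z < H%:R + 1 / 2) -> S1 z = z.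
Proof.
move=> hz; rewrite /S1 /fb.
case E: (bnear d1 (s / 2) XA id z) => [x|]; last by rewrite addr0.
have [hx dx] := near_some E.
exfalso; apply: hz; have /andP[t1 t2] := XA_range hx.
have := lastc_enorm (z - x); rewrite lastcB => h.
have : `|lastc z - lastc x| < s / 2 by apply: le_lt_trans h dx.
rewrite ltr_norml => /andP[a1 a2]; apply/andP; split; lra.
Qed.

Definition d2 (a b : 'rV[R]_k.+1) := supn (a - b).
Definition r2 : R := 1 / (2 * N).
Definition hx x t := hpl (1 / 2) (H%:R + 1 / 2) (lastc x) (mof x)%:R t.
Definition Bt y t :=
  match bnear d2 r2 XA pm y with
  | Some x => bv d2 r2 XA pm y * (hx x t - t) | None => 0 end.
Definition phi y t := t + Bt y t.
Definition S2 (z : 'rV[R]_k.+2) : 'rV[R]_k.+2 := mkv (projd z) (phi (projd z) (lastc z)).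

Lemma d2_tri a b c : d2 a c <= d2 a b + d2 b c. Proof. exact: supnDB. Qed.
Lemma d2_sym a b : d2 a b = d2 b a. Proof. exact: supnB. Qed.
Lemma d2_refl a : d2 a a = 0. Proof. by rewrite /d2 subrr supn0. Qed.
Lemma r2_gt0 : 0 < r2. Proof. by rewrite /r2 divr_gt0 // mulr_gt0 // N0. Qed.
Lemma sep2' i j : XA i -> XA j -> i <> j -> 2 * r2 <= d2 (pm i) (pm j).
Proof. exact: sep2. Qed.

Definition lo : R := 1 / (2 * H%:R).
Definition hi : R := H%:R / s.

Lemma hx_props x : XA x ->
  [/\ 1 / 2 < lastc x, lastc x < H%:R + 1 / 2,
      lo <= sg1 (1 / 2) (lastc x) (mof x)%:R <= hi &
      lo <= sg2 (H%:R + 1 / 2) (lastc x) (mof x)%:R <= hi].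
Proof.
move=> hx; have s0 := hs0; have /andP[t1 t2] := XA_range hx.
have [/andP[m1 m2] _] := mof_spec hx.
have m1R : 1 <= (mof x)%:R :> R by rewrite ler1n.
have m2R : (mof x)%:R <= H%:R :> R by rewrite ler_nat.
split; try lra.
- apply: frac_bounds; apply/andP; split; lra.
- apply: frac_bounds; apply/andP; split; lra.
Qed.

Lemma lo_props : [/\ 0 <= lo, lo <= 1 & 1 <= hi].
Proof.
have s0 := hs0; have s14 := hs14; have H1 : 1 <= H%:R :> R by rewrite ler1n.
split.
- by rewrite /lo divr_ge0 // mulr_ge0 // ler0n.
- by rewrite /lo ler_pdivrMr ?mulr_gt0 //; lra.
- by rewrite /hi ler_pdivlMr //; lra.
Qed.

Lemma hx_dev x t : XA x -> `|hx x t - t| <= H%:R.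
Proof.
move=> hX'; have [a1 a2 b1 b2] := hx_props hX'; have [l0 l1 h1] := lo_props.
have := hpl_dev a1 a2 t l0 l1 h1 b1 b2; rewrite /hx.
by have -> : H%:R + 1 / 2 - 1 / 2 = H%:R :> R by ring.
Qed.

Lemma Bt_lip a b t : `|Bt a t - Bt b t| <= 2 * N * H%:R * enorm (a - b).
Proof.
have hN0 := N0.
have := bump_scalar_lip d2_tri d2_sym d2_refl r2_gt0 sep2' (g := fun x => hx x t - t)
  (G := H%:R) (ler0n _ _) (fun x hx' => hx_dev t hx') a b.
rewrite -/(Bt a t) -/(Bt b t) => h; apply: le_trans h _.
rewrite /d2 /r2.
have -> : H%:R * (supn (a - b) / (1 / (2 * N))) = 2 * N * H%:R * supn (a - b) by field; rewrite gt_eqF.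
apply: ler_wpM2l; last exact: supn_le_enorm.
by rewrite !mulr_ge0 ?ler0n // ltW.
Qed.

Lemma phi_mono y t u : t <= u -> lo * (u - t) <= phi y u - phi y t <= hi * (u - t).
Proof.
move=> tu; have [l0 l1 h1] := lo_props.
have ut : 0 <= u - t by rewrite subr_ge0.
rewrite /phi /Bt.
case E: (bnear d2 r2 XA pm y) => [x|]; last first.
  rewrite !addr0; apply/andP; split; nra.
have [hx' _] := near_some E.
have [a1 a2 b1 b2] := hx_props hx'.
have /andP[s1 s2] := hpl_slope a1 a2 tu l0 l1 h1 b1 b2.
have bl0 := bv_ge0 d2 r2_gt0 XA pm y; have bl1 := bv_le1 d2_tri d2_sym d2_refl r2_gt0 XA pm y.
move: s1 s2 bl0 bl1; rewrite -/(hx x u) -/(hx x t); set l := bv _ _ _ _ _ => s1 s2 bl0 bl1.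
have e : u + l * (hx x u - u) - (t + l * (hx x t - t)) = (1 - l) * (u - t) + l * (hx x u - hx x t) by ring.
rewrite e.
have p1 : 0 <= (1 - l) * ((u - t) - lo * (u - t)) by apply: mulr_ge0; nra.
have p2 : 0 <= l * ((hx x u - hx x t) - lo * (u - t)) by apply: mulr_ge0; lra.
have p3 : 0 <= (1 - l) * (hi * (u - t) - (u - t)) by apply: mulr_ge0; nra.
have p4 : 0 <= l * (hi * (u - t) - (hx x u - hx x t)) by apply: mulr_ge0; lra.
apply/andP; split; nra.
Qed.

Lemma phi_abs y t u : lo * `|u - t| <= `|phi y u - phi y t| <= hi * `|u - t|.
Proof.
case: (boolP (t <= u)) => h.
  have /andP[a b] := phi_mono y h; have [l0 _ _] := lo_props.
  have p : 0 <= lo * (u - t) by rewrite mulr_ge0 // subr_ge0.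
  rewrite !ger0_norm ?subr_ge0 //; first by rewrite a b.
  by rewrite -subr_ge0; exact: le_trans p a.
have h' : u <= t by rewrite ltW // ltNge.
have /andP[a b] := phi_mono y h'; have [l0 _ _] := lo_props.
have p : 0 <= lo * (t - u) by rewrite mulr_ge0 // subr_ge0.
rewrite (distrC (phi y u)) (distrC u).
rewrite !ger0_norm ?subr_ge0 //; first by rewrite a b.
by rewrite -subr_ge0; exact: le_trans p a.
Qed.

Lemma S2_X x : XA x -> S2 (mkv (pm x) (lastc x)) = mkv (pm x) (mof x)%:R.
Proof.
move=> hx'; have [a1 a2 _ _] := hx_props hx'.
rewrite /S2 projd_mkv lastc_mkv /phi /Bt.
rewrite (near_c d2_tri d2_sym d2_refl r2_gt0 sep2' hx') (bv_c d2_tri d2_sym d2_refl r2_gt0 sep2' hx') mul1r.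
by rewrite addrC subrK /hx (hpl_tx _ a1 a2).
Qed.

Lemma S2_out z : ~ (1 / 2 < lastc z < H%:R + 1 / 2) -> S2 z = z.
Proof.
move=> hz.
have ht : lastc z <= 1 / 2 \/ H%:R + 1 / 2 <= lastc z.
  case: (boolP (lastc z <= 1 / 2)) => h1; first by left.
  right; case: (boolP (H%:R + 1 / 2 <= lastc z)) => h2 //.
  exfalso; apply: hz; rewrite -!ltNge in h1 h2; by rewrite h1 h2.
have B0 : Bt (projd z) (lastc z) = 0.
  rewrite /Bt; case E: (bnear d2 r2 XA pm (projd z)) => [x|] //.
  have [hx' _] := near_some E; have [a1 a2 _ _] := hx_props hx'.
  by rewrite /hx (hpl_out _ a1 a2 ht) subrr mulr0.
rewrite /S2 /phi B0 addr0; apply: vec_ext; by rewrite ?projd_mkv ?lastc_mkv.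
Qed.

Lemma S2_proj a b : projd (S2 a - S2 b) = projd (a - b).
Proof. by rewrite projdB /S2 !projd_mkv projdB. Qed.

Lemma S2_last a b : lastc (S2 a - S2 b) = phi (projd a) (lastc a) - phi (projd b) (lastc b).
Proof. by rewrite lastcB /S2 !lastc_mkv. Qed.

Lemma phi_split a b t u : phi a t - phi b u = (phi a t - phi a u) + (Bt a u - Bt b u).
Proof. rewrite /phi; ring. Qed.

Lemma S2_fwd a b : enorm (S2 a - S2 b) <= (1 + 2 * N * H%:R + hi) * enorm (a - b).
Proof.
have hN0 := N0; have [_ _ h1] := lo_props.
apply: le_trans (enorm_split _) _.
rewrite S2_proj S2_last phi_split.
have e1 := enorm_projd (a - b); have e2 := lastc_enorm (a - b).
have /andP[_ p1] := phi_abs (projd a) (lastc b) (lastc a).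
have p2 := Bt_lip (projd a) (projd b) (lastc b).
rewrite -projdB in p2.
have q := ler_normD (phi (projd a) (lastc a) - phi (projd a) (lastc b)) (Bt (projd a) (lastc b) - Bt (projd b) (lastc b)).
rewrite lastcB in e2.
have C0 : 0 <= 2 * N * H%:R by rewrite !mulr_ge0 ?ler0n // ltW.
have := enorm_ge0 (projd (a - b)).
have r1 : hi * `|lastc a - lastc b| <= hi * enorm (a - b) by rewrite ler_wpM2l //; lra.
have r2' : 2 * N * H%:R * enorm (projd (a - b)) <= 2 * N * H%:R * enorm (a - b) by rewrite ler_wpM2l.
move=> ?; nra.
Qed.

Lemma S2_inv a b : enorm (a - b) <= (1 + 2 * H%:R * (1 + 2 * N * H%:R)) * enorm (S2 a - S2 b).
Proof.
have hN0 := N0; have [l0 _ _] := lo_props; have H1 : 1 <= H%:R :> R by rewrite ler1n.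
have fe := enorm_projd (S2 a - S2 b); have fl := lastc_enorm (S2 a - S2 b).
rewrite S2_proj in fe; rewrite S2_last phi_split in fl.
set F := enorm (S2 a - S2 b) in fe fl *.
apply: le_trans (enorm_split _) _.
have /andP[p1 _] := phi_abs (projd a) (lastc b) (lastc a).
have p2 := Bt_lip (projd a) (projd b) (lastc b).
rewrite -projdB in p2.
have q := ler_normB (phi (projd a) (lastc a) - phi (projd a) (lastc b) + (Bt (projd a) (lastc b) - Bt (projd b) (lastc b))) (Bt (projd a) (lastc b) - Bt (projd b) (lastc b)).
rewrite addrK in q.
rewrite lastcB.
have C0 : 0 <= 2 * N * H%:R by rewrite !mulr_ge0 ?ler0n // ltW.
have r2' : 2 * N * H%:R * enorm (projd (a - b)) <= 2 * N * H%:R * F by rewrite ler_wpM2l.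
have key : lo * `|lastc a - lastc b| <= (1 + 2 * N * H%:R) * F by lra.
have elo : 2 * H%:R * lo = 1 by rewrite /lo; field; rewrite pnatr_eq0 -lt0n.
have : `|lastc a - lastc b| <= 2 * H%:R * ((1 + 2 * N * H%:R) * F).
  have : 2 * H%:R * (lo * `|lastc a - lastc b|) <= 2 * H%:R * ((1 + 2 * N * H%:R) * F).
    by rewrite ler_wpM2l // mulr_ge0 // ler0n.
  by rewrite mulrA elo mul1r.
lra.
Qed.

Lemma main_exists : exists Psi : 'rV[R]_k.+2 -> 'rV[R]_k.+2,
    bilipschitz (2 ^+ 8 * N ^+ 2 * H%:R ^+ 2) Psi /\
    (forall x, ~ (1 / 2 < lastc x < H%:R + 1 / 2) -> Psi x = x) /\
    (forall m x, (1 <= m <= H)%N -> X m x ->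
       [/\ in_scaled_lattice N (projd (Psi x)),
           ~ in_lattice (projd (Psi x)) &
           lastc (Psi x) = m%:R]) /\
    (forall m x, (1 <= m <= H)%N -> X m x ->
       enorm (projd (Psi x) - projd x) <= s ^+ 2).
Proof.
have [_ _ Ns N1 _] := cst; have hN0 := N0; have s0 := hs0.
have H1 : 1 <= H%:R :> R by rewrite ler1n.
have hiN : hi <= N * H%:R.
  rewrite /hi (mulrC N); have -> : H%:R / s = H%:R * (1 / s) by rewrite mul1r.
  by rewrite ler_wpM2l ?ler0n.
set L := 2 ^+ 8 * N ^+ 2 * H%:R ^+ 2.
have NH1 : 1 <= N * H%:R by nra.
have Lf : (1 + 2 * N * H%:R + hi) * (3 / 2) <= L.
  rewrite /L; have : 0 <= hi by rewrite /hi divr_ge0 ?ler0n // ltW. nra.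
have Li : 2 * (1 + 2 * H%:R * (1 + 2 * N * H%:R)) <= L.
  rewrite /L; nra.
have L0 : 0 <= L by rewrite /L; apply: mulr_ge0; [apply: mulr_ge0|]; apply: exprn_ge0; lra.
have fwd : forall z w, enorm (S2 (S1 z) - S2 (S1 w)) <= L * enorm (z - w).
  move=> z w; apply: le_trans (S2_fwd _ _) _.
  have hi0 : 0 <= hi by rewrite /hi divr_ge0 ?ler0n // ltW.
  have c0 : 0 <= 1 + 2 * N * H%:R + hi by rewrite !addr_ge0 // !mulr_ge0 ?ler0n // ltW.
  apply: le_trans (ler_wpM2l c0 (S1_fwd z w)) _.
  rewrite mulrA; apply: ler_wpM2r; [exact: enorm_ge0|exact: Lf].
have inv : forall z w, enorm (z - w) <= L * enorm (S2 (S1 z) - S2 (S1 w)).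
  move=> z w; apply: le_trans (S1_inv z w) _.
  apply: le_trans (ler_wpM2l (ler0n _ 2) (S2_inv (S1 z) (S1 w))) _.
  rewrite mulrA; apply: ler_wpM2r; [exact: enorm_ge0|exact: Li].
exists (fun z => S2 (S1 z)); split; [|split; [|split]].
- split; [|split] => //.
  move=> z w e; have := inv z w; rewrite e subrr enorm0 mulr0 => h.
  apply/eqP; rewrite -subr_eq0; apply/eqP; apply: enorm_eq0.
  by apply/le_anti; rewrite h enorm_ge0.
- by move=> z hz; rewrite (S1_out hz) (S2_out hz).
- move=> m x hm Xm; have hx' : XA x by exists m.
  rewrite /= (S1_X hx') (S2_X hx') projd_mkv lastc_mkv (mof_uniq hm Xm).
  split => //; [exact: gp_lattice | exact: gp_notlattice].
- move=> m x hm Xm; have hx' : XA x by exists m.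
  rewrite /= (S1_X hx') (S2_X hx') projd_mkv; exact: pm_close.
Qed.

End Main.

Unset Implicit Arguments.

Theorem lemma6p2 (R : realType) (d H : nat) (s N : R)
  (X : nat -> set 'rV[R]_d) :
  (2 <= d)%N -> (1 <= H)%N ->
  0 < s -> s <= 1 / 4 ->
  (2 * Num.sqrt (d%:R) / s) ^+ 3 * powR (H%:R) (1 / (d.-1)%:R) <= N ->
  (forall m x, (1 <= m <= H)%N -> X m x ->
     1 / 2 + s <= lastc x <= H%:R + 1 / 2 - s) ->
  (forall m m', (1 <= m <= H)%N -> (1 <= m' <= H)%N -> m <> m' ->
     X m `&` X m' = set0) ->
  separated s (\bigcup_(m in [set m | (1 <= m <= H)%N]) X m) ->
  exists Psi : 'rV[R]_d -> 'rV[R]_d,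
    bilipschitz (2 ^+ 8 * N ^+ 2 * H%:R ^+ 2) Psi /\
    (forall x, ~ (1 / 2 < lastc x < H%:R + 1 / 2) -> Psi x = x) /\
    (forall m x, (1 <= m <= H)%N -> X m x ->
       [/\ in_scaled_lattice N (projd (Psi x)),
           ~ in_lattice (projd (Psi x)) &
           lastc (Psi x) = m%:R]) /\
    (forall m x, (1 <= m <= H)%N -> X m x ->
       enorm (projd (Psi x) - projd x) <= s ^+ 2).
Proof.
case: d X => [|[|k]] X hd //.
move=> hH hs0 hs14 hN hX hdisj hsep.
exact: (main_exists hH hs0 hs14 hN hX hdisj hsep).
Qed.
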